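(* For every integer $g\ge1$, there are at most $2^{g-1}$ numerical semigroups of genus $g$.
   Context: A numerical semigroup is a submonoid $S$ of $(\mathbb N,+)$ with finite complement; its genus is $\#(\mathbb N\setminus S)$. *)

(* Defs.v *)
From mathcomp Require Import all_boot.
Set Implicit Arguments. Unset Strict Implicit. Unset Printing Implicit Defensive.

Definition numerical_semigroup (S : nat -> bool) : Prop :=
  [/\ S 0,
      (forall x y, S x -> S y -> S (x + y)) &
      exists gaps : seq nat, forall n, (n \in gaps) = ~~ S n].

Definition has_genus (S : nat -> bool) (g : nat) : Prop :=
  exists gaps : seq nat, [/\ uniq gaps, (forall n, (n \in gaps) = ~~ S n) & size gaps = g].

(* Main.v *)
Require Import Defs.
From mathcomp Require Import all_boot.
From Stdlib Require Import IndefiniteDescription.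

Record data (S : nat -> bool) (gs : seq nat) (g m : nat) : Prop := Data {
  d0 : S 0;
  dadd : forall x y, S x -> S y -> S (x + y);
  duniq : uniq gs;
  dmem : forall n, (n \in gs) = ~~ S n;
  dsize : size gs = g;
  dm0 : 0 < m;
  dSm : S m;
  dmin : forall p, 0 < p -> p < m -> ~~ S p }.
Arguments d0 {S gs g m}. Arguments dadd {S gs g m}. Arguments duniq {S gs g m}.
Arguments dmem {S gs g m}. Arguments dsize {S gs g m}. Arguments dm0 {S gs g m}.
Arguments dSm {S gs g m}. Arguments dmin {S gs g m}.

Definition idx (gs : seq nat) m r := count (fun l => l %% m < r) gs.
Definition kk (gs : seq nat) m r := count (fun l => l %% m == r) gs.

Lemma list_bound (gs : seq nat) : exists B, forall x, x \in gs -> x < B.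
Proof.
elim: gs => [|x s [B HB]]; first by exists 0.
exists (maxn x.+1 B) => y; rewrite inE => /orP[/eqP->|/HB h].
  by rewrite leq_max leqnn.
by rewrite leq_max h orbT.
Qed.

Lemma mulS {S gs g m} : data S gs g m -> forall q, S (q * m).
Proof.
move=> H; elim=> [|q IH]; first by rewrite mul0n (d0 H).
by rewrite mulSn; apply: (dadd H) => //; exact: (dSm H).
Qed.

Lemma res0 {S gs g m} : data S gs g m -> forall l, l \in gs -> l %% m != 0.
Proof.
move=> H l; rewrite (dmem H) => Hl; apply/negP => /eqP h.
by move: Hl; rewrite (divn_eq l m) h addn0 (mulS H).
Qed.

Lemma downQ (P : pred nat) B :
  (forall q q', q' <= q -> P q -> P q') -> (forall q, B <= q -> ~~ P q) ->
  exists Q, forall q, P q = (q < Q).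
Proof.
move=> Hd; elim: B => [|B IH] HB.
  by exists 0 => q; rewrite ltn0; apply/negbTE/HB.
case PB: (P B).
  exists B.+1 => q; rewrite ltnS; case: (leqP q B) => hq.
    by apply: (Hd B).
  by apply/negbTE/HB.
apply: IH => q; rewrite leq_eqVlt => /orP[/eqP<-|/HB //]; by rewrite PB.
Qed.

Lemma count_step (f : nat -> nat) r (s : seq nat) :
  count (fun l => f l < r.+1) s = count (fun l => f l < r) s + count (fun l => f l == r) s.
Proof.
elim: s => //= x s ->; rewrite ltnS leq_eqVlt.
case: (ltngtP (f x) r) => //= _; by rewrite ?addnS ?add0n ?addn0 ?addSn ?addn1.
Qed.

Lemma m2 {S gs g m} : data S gs g m -> 1 <= g -> 1 < m.
Proof.
move=> H hg; rewrite ltnNge; apply/negP => hm.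
have m1 : m = 1 by apply/eqP; rewrite eqn_leq hm (dm0 H).
move: (dsize H) hg; case: gs H => [|x s] H; first by move=> <-.
move=> _ _; have := dmem H x; rewrite inE eqxx /=.
by have := mulS H x; rewrite m1 muln1 => ->.
Qed.

Lemma Lk {S gs g m} : data S gs g m -> forall r, 0 < r -> r < m ->
  forall q, S (r + q * m) = (kk gs m r <= q).
Proof.
move=> H r r0 rm.
have [B HB] := list_bound gs.
have [Q HQ] : exists Q, forall q, ~~ S (r + q * m) = (q < Q).
  apply: (@downQ (fun q => ~~ S (r + q * m)) B).
    move=> q q' hq' /=; apply: contra => h.
    have -> : r + q * m = (r + q' * m) + (q - q') * m.
      by rewrite -addnA -mulnDl subnKC.
    by apply: (dadd H) => //; exact: (mulS H).
  move=> q hq /=; rewrite negbK; apply/negPn; rewrite -(dmem H).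
  apply/negP => /HB; rewrite ltnNge => /negP; apply.
  apply: (leq_trans hq); apply: (leq_trans _ (leq_addl _ _)).
  by rewrite -{1}(muln1 q) leq_mul2l (dm0 H) orbT.
have -> : kk gs m r = Q.
  rewrite /kk -size_filter.
  have hp : perm_eq (filter (fun l => l %% m == r) gs) (map (fun q => r + q * m) (iota 0 Q)).
    apply: uniq_perm.
    - by apply: filter_uniq; exact: (duniq H).
    - rewrite map_inj_uniq ?iota_uniq // => a b /eqP; rewrite eqn_add2l eqn_pmul2r ?(dm0 H) //.
      by move/eqP.
    move=> l; rewrite mem_filter; apply/andP/mapP.
      move=> [/eqP hr hl]; exists (l %/ m).
        rewrite mem_iota add0n /= -HQ -(dmem H).
        by rewrite addnC -hr -divn_eq.
      by rewrite addnC -hr -divn_eq.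
    move=> [q]; rewrite mem_iota add0n /= => hq ->.
    rewrite (dmem H) HQ hq /=.
    by rewrite addnC modnMDl modn_small.
  by rewrite (perm_size hp) size_map size_iota.
by move=> q; rewrite leqNgt -HQ negbK.
Qed.

Lemma idx_step gs m r : idx gs m r.+1 = idx gs m r + kk gs m r.
Proof. exact: count_step. Qed.

Lemma idx1 {S gs g m} : data S gs g m -> idx gs m 1 = 0.
Proof.
move=> H; apply/eqP; rewrite eqn0Ngt -has_count; apply/hasPn => l hl.
by rewrite ltnS leqn0 (res0 H).
Qed.

Lemma idxm {S gs g m} : data S gs g m -> idx gs m m = g.
Proof.
move=> H; rewrite -(dsize H); apply/eqP; rewrite -all_count; apply/allP => l _.
by rewrite ltn_pmod ?(dm0 H).
Qed.

Lemma kk_pos {S gs g m} : data S gs g m -> forall r, 0 < r -> r < m -> 0 < kk gs m r.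
Proof.
move=> H r r0 rm; have := Lk H _ r0 rm 0; rewrite mul0n addn0.
by rewrite (negbTE (dmin H _ r0 rm)) leqn0 lt0n => <-.
Qed.

Lemma idx_mono gs m r r' : r <= r' -> idx gs m r <= idx gs m r'.
Proof. by move=> h; apply: sub_count => l /= hl; exact: leq_trans hl h. Qed.

Lemma idx_strict {S gs g m} : data S gs g m -> forall r r', 0 < r -> r < r' -> r' <= m ->
  idx gs m r < idx gs m r'.
Proof.
move=> H r r' r0 rr' r'm; apply: (@leq_trans (idx gs m r.+1)); last exact: idx_mono.
by rewrite idx_step -addn1 leq_add2l (kk_pos H _ r0 (leq_trans rr' r'm)).
Qed.

Definition enc g gs m : {set 'I_(g - 1)} :=
  [set j : 'I_(g - 1) | [exists r : 'I_m, (1 < r) && (idx gs m r == j.+1)]].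

Definition inA g (A : {set 'I_(g - 1)}) a :=
  (exists j : 'I_(g - 1), j \in A /\ a = j.+1) \/ a = g.
Arguments inA {g}.

Lemma inA_char {S gs g m} : data S gs g m -> 1 <= g -> forall a,
  inA (enc g gs m) a <-> exists r, [/\ 1 < r, r <= m & idx gs m r = a].
Proof.
move=> H hg a; split.
  case=> [[j [hj ->]]|->].
    move: hj; rewrite inE => /existsP [r /andP [r1 /eqP hr]].
    by exists r; split => //; exact: ltnW.
  by exists m; split => //; [exact: (m2 H) | exact: (idxm H)].
move=> [r [r1 rm <-]].
case: (ltngtP r m) rm => // hrm _; last by right; rewrite hrm (idxm H).
have i0 : 0 < idx gs m r.
  by rewrite -(idx1 H); apply: (idx_strict H) => //; exact: ltnW.
have ig : idx gs m r < idx gs m m.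
  by apply: (idx_strict H) => //; exact: ltnW.
rewrite (idxm H) in ig.
have hj : (idx gs m r).-1 < g - 1.
  by rewrite -(prednK i0) in ig; rewrite ltn_subRL add1n.
left; exists (Ordinal hj); split; last by rewrite /= prednK.
rewrite inE; apply/existsP; exists (Ordinal hrm); rewrite /= r1 /= prednK //.
Qed.

Lemma next_char {S gs g m} : data S gs g m -> 1 <= g -> forall r, 0 < r -> r < m ->
  [/\ inA (enc g gs m) (idx gs m r.+1), idx gs m r < idx gs m r.+1 &
      forall a, inA (enc g gs m) a -> idx gs m r < a -> idx gs m r.+1 <= a].
Proof.
move=> H hg r r0 rm; split.
- by apply/(inA_char H hg); exists r.+1; split.
- by apply: (idx_strict H).
move=> a /(inA_char H hg) [r' [r'1 r'm <-]] hlt.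
apply: idx_mono; rewrite ltnNge; apply/negP => h.
by move: (@idx_mono gs m _ _ h); rewrite leqNgt hlt.
Qed.

Lemma enc_inj {S gs m S' gs' m' g} : data S gs g m -> data S' gs' g m' -> 1 <= g ->
  enc g gs m = enc g gs' m' -> S =1 S'.
Proof.
move=> H H' hg he.
have stepA : forall r, 0 < r -> r <= minn m m' -> idx gs m r = idx gs' m' r.
  elim=> // r IH _; rewrite leq_min => /andP [h1 h2].
  case: r IH h1 h2 => [|r] IH h1 h2; first by rewrite (idx1 H) (idx1 H').
  have e := IH isT; rewrite leq_min (ltnW h1) (ltnW h2) in e; have {}e := e isT.
  have [a1 b1 c1] := next_char H hg _ (ltn0Sn r) h1.
  have [a2 b2 c2] := next_char H' hg _ (ltn0Sn r) h2.
  rewrite he in a1 c1.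
  apply/eqP; rewrite eqn_leq; apply/andP; split.
    by apply: c1 => //; rewrite e.
  by apply: c2 => //; rewrite -e.
have em : m = m'.
  case: (ltngtP m m') => // hm.
    have := stepA m (dm0 H); rewrite leq_min leqnn ltnW //= => /(_ isT).
    rewrite (idxm H) => e.
    have := idx_strict H' _ _ (dm0 H) hm (leqnn m'); rewrite -e (idxm H').
    by rewrite ltnn.
  have := stepA m' (dm0 H'); rewrite leq_min leqnn ltnW //= => /(_ isT).
  rewrite (idxm H') => e.
  have := idx_strict H _ _ (dm0 H') hm (leqnn m); rewrite e (idxm H).
  by rewrite ltnn.
subst m'.
move=> x; rewrite (divn_eq x m).
case r0: (x %% m) => [|r]; first by rewrite addn0 (mulS H) (mulS H').
have rm : r.+1 < m by rewrite -r0 ltn_pmod ?(dm0 H).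
rewrite addnC (Lk H _ (ltn0Sn r) rm) (Lk H' _ (ltn0Sn r) rm).
have ek : kk gs m r.+1 = kk gs' m r.+1.
  apply/eqP; rewrite -(eqn_add2l (idx gs m r.+1)) -idx_step.
  rewrite (stepA r.+1) // ?leq_min ?(ltnW rm) // -idx_step.
  by rewrite (stepA r.+2) // leq_min rm.
by rewrite ek.
Qed.

Lemma exists_data S g : numerical_semigroup S -> has_genus S g ->
  exists gs m, data S gs g m.
Proof.
move=> [S0 Sadd _] [gs [hu hm hs]].
have [B HB] := list_bound gs.
have ex : exists p, (0 < p) && S p.
  exists B.+1; apply/andP; split => //; apply/negPn; rewrite -hm.
  by apply/negP => /HB; rewrite ltnNge leqnSn.
case: (ex_minnP ex) => m /andP [m0 Sm] Hmin.
exists gs, m; split => // p p0 pm; apply/negP => Sp.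
by have := Hmin p; rewrite p0 Sp => /(_ isT); rewrite leqNgt pm.
Qed.

Theorem corollary2p2 (g : nat) (hg : 1 <= g) (n : nat) (S : 'I_n -> nat -> bool)
  (hS : forall i, numerical_semigroup (S i) /\ has_genus (S i) g)
  (hinj : forall i j, S i =1 S j -> i = j) :
  n <= 2 ^ (g - 1).
Proof.
have hE : forall i, exists A : {set 'I_(g - 1)},
    exists gs m, data (S i) gs g m /\ A = enc g gs m.
  move=> i; have [h1 h2] := hS i; have [gs [m H]] := exists_data _ _ h1 h2.
  by exists (enc g gs m), gs, m.
pose f i := proj1_sig (constructive_indefinite_description _ (hE i)).
have finj : injective f.
  move=> i j; rewrite /f.
  case: (constructive_indefinite_description _ (hE i)) => /= A [gs [m [H ->]]].
  case: (constructive_indefinite_description _ (hE j)) => /= B [gs' [m' [H' ->]]].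
  by move=> e; apply: hinj; exact: (enc_inj H H' hg e).
have := leq_card f finj.
by rewrite card_ord -cardsT -powersetT card_powerset cardsT card_ord.
Qed.
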